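(* Let $\Delta$, $\mathcal T$ (regular), $\Sigma$, $\mathbf v_0,\ldots,\mathbf v_n$, $K$, $\Phi_\beta$, $\int_{\mathcal A}$ and $C^{ample}_{\mathcal T}$ be as in the context, and let $\mathbf p=p\oplus d\in K\cap\bar M$. Let $\beta=(b_0,\ldots,b_n)\in\mathbb Z^{n+1}$ satisfy $\sum_{i=0}^nb_i\mathbf v_i=-\mathbf p$ and $b_0\le0$. If $\int_{\mathcal A}\Phi_\beta\ne0$, then $$\sum_{i=1}^nb_ih(v_i)+h(p)\ge0\quad\text{for every }h\in C^{ample}_{\mathcal T}.$$
   Context: $M\cong\mathbb Z^d$ lattice with dual $N$; $\Delta\subset M_{\mathbb R}$ a reflexive polytope; $v_1,\ldots,v_n\in\partial\Delta\cap M$ include all vertices of $\Delta$; $\mathcal T$ a regular triangulation of $\Delta$ with vertex set $\{\mathbf0\}\cup\{v_i\}$, all maximal simplices containing $\mathbf 0$; $\Sigma$ the complete simplicial fan of cones over simplices of $\mathcal T$ not containing $\mathbf0$. $C^{ample}_{\mathcal T}$ is the set of functions $h:M_{\mathbb R}\to\mathbb R$, linear on each cone of $\Sigma$ (integer-valued on $M$), such that for all points $y_i\in M_{\mathbb R}$ and positive reals $\alpha_i$, $h(\sum_i\alpha_iy_i)\le\sum_i\alpha_ih(y_i)$, with equality iff some cone of $\Sigma$ contains all $y_i$. For $k\ge0$, $A_k$ is $\mathbb C[D_1,\ldots,D_n]$ modulo $\sum_i(\lambda\cdot v_i)D_i$ ($\lambda\in N$) and monomials $\prod_iD_i^{r_i}$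 such that no cone of $\Sigma$ contains all $v_i$ with $r_i>k$; it is identified with $H^*(\mathbb P_{\Sigma_k},\mathbb C)$ via $D_i\mapsto(k+1)D_{i,0}$, where $\Sigma_k$ is the complete simplicial fan in $M\oplus\mathbb Z^{nk}$ with rays $v_{i,j}=v_i\oplus e_{i,j}$ ($0\le j\le k$, $e_{i,j}$ for $j\ge1$ a basis, $e_{i,0}=-\sum_{j\ge1}e_{i,j}$), cones generated by sets $\{v_{i,j}:(i,j)\in I\}$ such that the $v_i$ with $(i,0),\ldots,(i,k)\in I$ lie in a cone of $\Sigma$, and $D_{i,j}$ the class of ray $v_{i,j}$. $\int_{A_k}=(k+1)^{-nk}\int_{\mathbb P_{\Sigma_k}}$; $\mathcal A=\varinjlim A_k$ under multiplication by $\prod_iD_i^l$, with induced $\int_{\mathcal A}$. $D_0=-\sum_iD_i$, $\bar M=M\oplus\mathbb Z$, $\mathbf v_i=v_i\oplus1$, $\mathbf v_0=\mathbf0\oplus1$, $K$ the cone spanned by the $\mathbf v_i$. $\Phi_\beta\in\mathcal A$ is the image of $D_0^{-b_0}\prod_{i=1}^nD_i^{k-b_i}\in A_k$ for $k\ge\max_ib_i$. *)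

(* Defs.v *)
From HB Require Import structures.
From mathcomp Require Import all_boot all_order all_algebra all_field.
From mathcomp Require Import reals.
From mathcomp Require Import mpoly.
Set Implicit Arguments. Unset Strict Implicit. Unset Printing Implicit Defensive.
Import Order.TTheory GRing.Theory Num.Theory.
Local Open Scope ring_scope.

(* Lattice M = Z^d (row vectors 'rV[int]_d), M_R = R^d ('rV[R]_d).          *)
(* The dual lattice N is identified with Z^d via the standard dot product.  *)

Section Geometry.
Variables (R : realType) (d : nat).

Definition vR (x : 'rV[int]_d) : 'rV[R]_d := map_mx (fun z : int => z%:~R) x.

Definition dotR (x y : 'rV[R]_d) : R := \sum_(c < d) x 0 c * y 0 c.

Definition in_conv (s : seq 'rV[R]_d) (x : 'rV[R]_d) : Prop :=
  exists lam : 'I_(size s) -> R,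
    (forall i, 0 <= lam i) /\ \sum_i lam i = 1 /\
    x = \sum_i lam i *: nth 0 s i.

(* Reflexive polytope: a lattice polytope conv(V) (V in M) which is also of
   the form {x | <u, x> >= -1 for all u in U} with U in N.  (This is
   Batyrev's definition: 0 is interior and the polar polytope conv(U) is a
   lattice polytope.) *)
Definition reflexive_polytope (Delta : 'rV[R]_d -> Prop) : Prop :=
  exists (V U : seq 'rV[int]_d),
    (forall x, Delta x <-> in_conv (map vR V) x) /\
    (forall x, Delta x <-> (forall u, u \in U -> -1 <= dotR (vR u) x)).

Definition interior_pt (Delta : 'rV[R]_d -> Prop) (x : 'rV[R]_d) : Prop :=
  exists eps : R, 0 < eps /\
    forall y : 'rV[R]_d, (forall c, `|y 0 c - x 0 c| < eps) -> Delta y.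

Definition boundary_pt (Delta : 'rV[R]_d -> Prop) (x : 'rV[R]_d) : Prop :=
  Delta x /\ ~ interior_pt Delta x.

Definition vertex_pt (Delta : 'rV[R]_d -> Prop) (x : 'rV[R]_d) : Prop :=
  Delta x /\ forall y z (t : R), Delta y -> Delta z -> 0 < t -> t < 1 ->
    x = t *: y + (1 - t) *: z -> y = x /\ z = x.

(* Point configuration {0} u {v_1..v_n}: indexed by option 'I_n,            *)
(* None <-> the origin 0, Some i <-> v_i.                                   *)
Variable n : nat.
Variable v : 'I_n -> 'rV[int]_d.

Definition wpt (j : option 'I_n) : 'rV[R]_d :=
  if j is Some i then vR (v i) else 0.

Definition simplex_conv (F : {set option 'I_n}) (x : 'rV[R]_d) : Prop :=
  exists lam : option 'I_n -> R,
    (forall j, 0 <= lam j) /\ (forall j, j \notin F -> lam j = 0) /\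
    \sum_j lam j = 1 /\ x = \sum_j lam j *: wpt j.

(* T (a set of simplices, each given by its vertex set) is a triangulation
   of Delta with vertex set exactly {0} u {v_1,...,v_n}. *)
Definition triangulation (Delta : 'rV[R]_d -> Prop)
    (T : {set {set option 'I_n}}) : Prop :=
  [/\
      (forall F G : {set option 'I_n}, F \in T -> G \subset F -> G \in T),
      (forall F : {set option 'I_n}, F \in T -> forall lam : option 'I_n -> R,
          \sum_(j in F) lam j = 0 -> \sum_(j in F) lam j *: wpt j = 0 ->
          forall j, j \in F -> lam j = 0),
      (forall x, Delta x <-> exists2 F, F \in T & simplex_conv F x),
      (forall (F G : {set option 'I_n}) x, F \in T -> G \in T -> simplex_conv F x ->
          simplex_conv G x -> simplex_conv (F :&: G) x) &
      (forall j, [set j] \in T)].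

(* Regularity: T is the set of (projections of) lower faces of the lifting
   of the points by some height function omega. *)
Definition regular (T : {set {set option 'I_n}}) : Prop :=
  exists omega : option 'I_n -> R, forall F : {set option 'I_n},
    F \in T <-> exists (a : 'rV[R]_d) (c : R),
      (forall j, j \in F -> dotR a (wpt j) + c = omega j) /\
      (forall j, j \notin F -> dotR a (wpt j) + c < omega j).

Definition max_simplices_contain_0 (T : {set {set option 'I_n}}) : Prop :=
  forall F : {set option 'I_n}, F \in T -> (forall G : {set option 'I_n}, G \in T -> F \subset G -> G = F) ->
    None \in F.

(* The fan Sigma: cones over the simplices of T not containing 0.           *)
(* A cone is given by the set J of indices of its rays v_j.                  *)
Definition sigma_cone (T : {set {set option 'I_n}}) (J : {set 'I_n}) : Prop :=
  [set Some j | j in J] \in T.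

Definition in_cone (J : {set 'I_n}) (x : 'rV[R]_d) : Prop :=
  exists mu : 'I_n -> R, (forall j, 0 <= mu j) /\
    x = \sum_(j in J) mu j *: vR (v j).

Definition in_common_cone (T : {set {set option 'I_n}}) (P : 'rV[R]_d -> Prop)
  : Prop := exists J, sigma_cone T J /\ forall y, P y -> in_cone J y.

Definition ample (T : {set {set option 'I_n}}) (h : 'rV[R]_d -> R) : Prop :=
  [/\
      (forall J, sigma_cone T J -> exists l : 'rV[R]_d,
          forall x, in_cone J x -> h x = dotR l x),
      (forall m : 'rV[int]_d, exists z : int, h (vR m) = z%:~R) &
      (forall (s : nat) (y : 'I_s -> 'rV[R]_d) (alpha : 'I_s -> R),
          (forall i, 0 < alpha i) ->
          h (\sum_i alpha i *: y i) <= \sum_i alpha i * h (y i) /\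
          (h (\sum_i alpha i *: y i) = \sum_i alpha i * h (y i) <->
             in_common_cone T (fun x => exists i, x = y i)))].

End Geometry.

(* Integration on the cohomology of a complete simplicial toric variety.    *)
(* H^*(P_Sigma', C) = C[D_rho] / (Stanley-Reisner ideal + linear relations) *)
(* and the integral is the linear functional on C[D_rho] which vanishes on  *)
(* that ideal and outside top degree, and satisfies                         *)
(*   int prod_{rho in sigma} D_rho = 1 / mult(sigma)                        *)
(* for every maximal cone sigma, mult(sigma) = |det(u_rho : rho in sigma)|. *)
(* Rays are indexed by a finite type I; variable D_rho is 'X_(enum_rank rho) *)
Section ToricIntegral.
Variables (I : finType) (D : nat).

Definition Xv (rho : I) : {mpoly algC[#|{: I}|]} := 'X_(enum_rank rho).

Definition dotZ (l u : 'rV[int]_D) : int := \sum_(c < D) l 0 c * u 0 c.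

Definition is_toric_integral (u : I -> 'rV[int]_D) (cone : {set I} -> Prop)
    (f : {mpoly algC[#|{: I}|]} -> algC) : Prop :=
  [/\
      (forall (a : algC) p q, f (a *: p + q) = a * f p + f q),
      (forall m : 'X_{1..#|{: I}|}, mdeg m <> D -> f 'X_[m] = 0),
      (forall S : {set I}, ~ cone S -> forall p, f (p * \prod_(rho in S) Xv rho) = 0),
      (forall (l : 'rV[int]_D) p,
          f (p * \sum_rho (dotZ l (u rho))%:~R *: Xv rho) = 0) &
      (forall (sigma : {set I}) (e : 'I_D -> I), cone sigma -> injective e ->
          sigma = [set e a | a : 'I_D] ->
          f (\prod_(rho in sigma) Xv rho) =
            ((absz (\det (\matrix_(a < D, c < D) u (e a) 0 c)))%:R)^-1)].

End ToricIntegral.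

(* The fan Sigma_k in M (+) Z^{nk}.  Rays v_{i,j}, (i,j) in 'I_n * 'I_k.+1.  *)
(* e_{i,j} (j >= 1) is the basis vector of Z^{nk} with index (i, j-1);       *)
(* e_{i,0} = - sum_{j>=1} e_{i,j}.                                           *)
Section SigmaK.
Variables (R : realType) (d n : nat) (v : 'I_n -> 'rV[int]_d).
Variable (T : {set {set option 'I_n}}).
Variable k : nat.

Definition eK (i : 'I_n) (j : 'I_k.+1) : 'rV[int]_(n * k) :=
  match unlift ord0 j with
  | Some j' => delta_mx 0 (mxvec_index i j')
  | None => - \sum_(j' < k) delta_mx 0 (mxvec_index i j')
  end.

Definition rayK (ij : 'I_n * 'I_k.+1) : 'rV[int]_(d + n * k) :=
  row_mx (v ij.1) (eK ij.1 ij.2).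

Definition coneK (I : {set 'I_n * 'I_k.+1}) : Prop :=
  in_common_cone (R := R) v T
    (fun x => exists i, x = vR R (v i) /\ forall j : 'I_k.+1, (i, j) \in I).

(* the identification A_k = H^*(P_{Sigma_k}) : D_i |-> (k+1) D_{i,0} *)
Definition idK (p : {mpoly algC[n]}) : {mpoly algC[#|{: 'I_n * 'I_k.+1}|]} :=
  comp_mpoly [tuple (k.+1)%:R *: Xv (i, ord0) | i < n] p.

Definition int_Ak (f : {mpoly algC[#|{: 'I_n * 'I_k.+1}|]} -> algC)
    (p : {mpoly algC[n]}) : algC :=
  ((k.+1)%:R ^+ (n * k))^-1 * f (idK p).

End SigmaK.

Definition D0 (n : nat) : {mpoly algC[n]} := - \sum_(i < n) 'X_i.

(* representative in A_k of Phi_beta, beta = (b0, b_1..b_n), for b0 <= 0 and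
   k >= max b_i :  D_0^{-b_0} prod_i D_i^{k - b_i} *)
Definition PhiK (n k : nat) (b0 : int) (b : 'I_n -> int) : {mpoly algC[n]} :=
  D0 n ^+ absz (- b0) * \prod_(i < n) 'X_i ^+ absz (k%:Z - b i).

(* Main.v *)
Require Import Defs.
From HB Require Import structures.
From mathcomp Require Import all_boot all_order all_algebra all_field.
From mathcomp Require Import reals.
From mathcomp Require Import mpoly.
From Stdlib Require Import Classical.
Set Implicit Arguments. Unset Strict Implicit. Unset Printing Implicit Defensive.
Import Order.TTheory GRing.Theory Num.Theory.
Local Open Scope ring_scope.
From mathcomp Require Import zify.
From mathcomp Require Import lra.
Section Alg.
Variables (d n k : nat) (v : 'I_n -> 'rV[int]_d).
Variable cone : {set 'I_n * 'I_k.+1} -> Prop.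
Variable f : {mpoly algC[#|{: 'I_n * 'I_k.+1}|]} -> algC.
Hypothesis Hf : is_toric_integral (@rayK d n v k) cone f.

Lemma f0 : f 0 = 0.
Proof.
case: Hf => lin _ _ _ _.
have := lin 1 0 0; rewrite scale1r addr0 mul1r => /eqP.
by move=> /eqP h; apply: (addrI (f 0)); rewrite addr0 -h.
Qed.

Lemma fD p q : f (p + q) = f p + f q.
Proof. by case: Hf => lin _ _ _ _; have := lin 1 p q; rewrite scale1r mul1r. Qed.

Lemma fN p : f (- p) = - f p.
Proof.
case: Hf => lin _ _ _ _.
by have := lin (-1) p 0; rewrite addr0 f0 addr0 scaleN1r mulN1r.
Qed.

Lemma mxvec_index_eq (i i2 : 'I_n) (j j2 : 'I_k) :
  (mxvec_index i2 j2 == mxvec_index i j) = ((i2, j2) == (i, j)).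
Proof.
apply/eqP/eqP => [|[-> ->] //].
by rewrite /mxvec_index => /cast_ord_inj /enum_rank_inj.
Qed.

Lemma dot_rel (i : 'I_n) (j : 'I_k) (rho : 'I_n * 'I_k.+1) :
  dotZ (row_mx (0 : 'rV_d) (delta_mx 0 (mxvec_index i j))) (@rayK d n v k rho) =
  (rho == (i, lift ord0 j))%:R - (rho == (i, ord0))%:R.
Proof.
rewrite /dotZ big_split_ord /= big1 ?add0r; last first.
  by move=> c _; rewrite row_mxEl mxE mul0r.
under eq_bigr => c _ do rewrite /rayK !row_mxEr.
rewrite (bigD1 (mxvec_index i j)) //= big1 ?addr0; last first.
  by move=> c /negbTE hc; rewrite mxE hc andbF mul0r.
rewrite mxE !eqxx mul1r.
case: rho => i2 j2 /=; rewrite /eK.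
case: unliftP => [j3 ->|->].
  rewrite mxE eqxx /= mxvec_index_eq !xpair_eqE.
  rewrite (inj_eq (@lift_inj _ ord0)) [lift _ _ == ord0]eq_sym (negbTE (neq_lift _ _)).
  by rewrite andbF subr0 [i == i2]eq_sym [j == j3]eq_sym.
rewrite !xpair_eqE (negbTE (neq_lift _ _)) andbF eqxx andbT sub0r.
rewrite mxE summxE.
under eq_bigr => c _ do rewrite mxE eqxx /= mxvec_index_eq xpair_eqE.
case: (i =P i2) => [<-|ne] /=.
  rewrite eqxx (bigD1 j) //= eqxx big1 ?addr0 // => c /negbTE.
  by rewrite eq_sym => ->.
rewrite big1 // oppr0.
by case: eqP => // E; case: ne.
Qed.

Lemma rel (i : 'I_n) (j : 'I_k) Q :
  f (Q * Xv (i, lift ord0 j)) = f (Q * Xv (i, ord0)).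
Proof.
case: Hf => _ _ _ Hl _.
have := Hl (row_mx (0 : 'rV_d) (delta_mx 0 (mxvec_index i j))) Q.
under eq_bigr => rho _ do rewrite dot_rel.
have E : forall x : 'I_n * 'I_k.+1,
  \sum_rho ((rho == x)%:R : int)%:~R *: Xv rho = Xv x.
  move=> x; rewrite (bigD1 x) //= eqxx scale1r big1 ?addr0 //.
  by move=> r /negbTE ->; rewrite scale0r.
under eq_bigr => rho _ do rewrite intrB scalerBl.
rewrite sumrB !E mulrBr fD fN => /eqP; rewrite subr_eq0 => /eqP //.
Qed.


Lemma relj (j : 'I_k.+1) (i : 'I_n) Q : f (Q * Xv (i, j)) = f (Q * Xv (i, ord0)).
Proof. by case: (unliftP ord0 j) => [j' ->|->] //; apply: rel. Qed.

Lemma relX (i : 'I_n) (s : seq 'I_k.+1) Q :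
  f (Q * Xv (i, ord0) ^+ size s) = f (Q * \prod_(j <- s) Xv (i, j)).
Proof.
elim: s Q => [|j s IH] Q; first by rewrite big_nil expr0.
by rewrite big_cons /= exprS mulrA IH mulrAC -(relj j) mulrAC -mulrA.
Qed.

Lemma relP (s : seq 'I_n) Q :
  f (Q * \prod_(i <- s) Xv (i, ord0) ^+ k.+1) =
  f (Q * \prod_(i <- s) \prod_(j : 'I_k.+1) Xv (i, j)).
Proof.
elim: s Q => [|i s IH] Q; first by rewrite !big_nil.
rewrite !big_cons mulrA IH mulrAC.
have := relX i (enum 'I_k.+1) (Q * \prod_(j <- s) \prod_(j0 : 'I_k.+1) Xv (j, j0)).
rewrite size_enum_ord => ->.
rewrite big_enum /= mulrAC -mulrA.
by congr (f (Q * (_ * _))); apply: eq_bigl.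
Qed.

Lemma vanish (S0 : {set 'I_n}) Q : ~ cone [set rho | rho.1 \in S0] ->
  f (Q * \prod_(i in S0) Xv (i, ord0) ^+ k.+1) = 0.
Proof.
move=> nc; rewrite -big_enum relP big_enum /=.
rewrite pair_big_dep /=.
case: Hf => _ _ SR _ _.
rewrite -(SR _ nc Q); congr (f (Q * _)).
apply: eq_big => [[a b]|[a b] _] //=.
by rewrite inE andbT.
Qed.
End Alg.
Lemma absz_ge (k : nat) (z : int) : z < 0 -> (k.+1 <= absz (k%:Z - z))%N.
Proof. move=> h. lia. Qed.

Lemma prod_factor (I : finType) (P : pred I) (R : comPzRingType) (F G H : I -> R) :
  (forall i, P i -> F i = G i * H i) ->
  \prod_(i | P i) F i = \prod_(i | P i) G i * \prod_(i | P i) H i.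
Proof. by move=> h; rewrite -big_split; apply: eq_bigr. Qed.

Lemma idK_factor (n k : nat) (b0 : int) (b : 'I_n -> int) :
  exists Q, idK k (@PhiK n k b0 b) =
    Q * \prod_(i in [set i | b i < 0]) Xv (i, ord0) ^+ k.+1.
Proof.
rewrite /idK /PhiK rmorphM rmorphXn rmorph_prod /=.
under eq_bigr => i _ do rewrite rmorphXn /= comp_mpolyXU -tnth_nth tnth_mktuple exprZn.
rewrite (bigID (mem [set i | b i < 0])) /=.
rewrite (@prod_factor _ _ _ _
   (fun i => (k.+1%:R ^+ absz (k%:Z - b i)) *: Xv (i, ord0) ^+ (absz (k%:Z - b i) - k.+1))
   (fun i => Xv (i, ord0) ^+ k.+1)); last first.
  move=> i; rewrite inE => /(absz_ge k) h.
  by rewrite -scalerAl -exprD subnK.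
eexists; rewrite mulrCA mulrAC; reflexivity.
Qed.
Section Real.
Variables (R : realType) (d n : nat) (v : 'I_n -> 'rV[int]_d).
Variable T : {set {set option 'I_n}}.

Lemma in_cone0 J : in_cone v J (0 : 'rV[R]_d).
Proof. exists (fun=> 0); split => [j //|]. 
by rewrite big1 // => j _; rewrite scale0r. Qed.

Lemma in_coneD J (x y : 'rV[R]_d) : in_cone v J x -> in_cone v J y -> in_cone v J (x + y).
Proof.
move=> [m1 [h1 ->]] [m2 [h2 ->]]; exists (fun j => m1 j + m2 j); split.
  by move=> j; rewrite addr_ge0.
by rewrite -big_split; apply: eq_bigr => j _; rewrite scalerDl.
Qed.

Lemma in_coneZ J (c : R) (x : 'rV[R]_d) : 0 <= c -> in_cone v J x -> in_cone v J (c *: x).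
Proof.
move=> hc [m1 [h1 ->]]; exists (fun j => c * m1 j); split.
  by move=> j; rewrite mulr_ge0.
by rewrite scaler_sumr; apply: eq_bigr => j _; rewrite scalerA.
Qed.

Lemma in_cone_sum J (I : finType) (c : I -> R) (x : I -> 'rV[R]_d) :
  (forall i, 0 <= c i) -> (forall i, c i != 0 -> in_cone v J (x i)) ->
  in_cone v J (\sum_i c i *: x i).
Proof.
move=> hc hx; apply: (big_ind (in_cone v J)).
- exact: in_cone0.
- exact: in_coneD.
move=> i _; case: (eqVneq (c i) 0) => [->|ne]; first by rewrite scale0r; exact: in_cone0.
by apply: in_coneZ => //; apply: hx.
Qed.

Lemma dotR_sum (l : 'rV[R]_d) (I : finType) (c : I -> R) (x : I -> 'rV[R]_d) :
  dotR l (\sum_i c i *: x i) = \sum_i c i * dotR l (x i).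
Proof.
rewrite /dotR.
under eq_bigr => k _ do rewrite summxE big_distrr /=.
rewrite exchange_big /=; apply: eq_bigr => i _.
rewrite big_distrr /=; apply: eq_bigr => k _.
by rewrite mxE mulrCA.
Qed.

Lemma sublin (h : 'rV[R]_d -> R) : ample v T h ->
  forall (x0 : 'rV[R]_d) (I : finType) (c : I -> R) (x : I -> 'rV[R]_d), (forall i, 0 <= c i) ->
  h (x0 + \sum_i c i *: x i) <= h x0 + \sum_i c i * h (x i).
Proof.
case=> _ _ cvx x0 I c x hc.
have h0 : h 0 <= 0.
  have [] := cvx 0%N (fun _ => 0) (fun _ => 1) (fun i => ltr01).
  by rewrite !big_ord0.
have hD : forall a b, h (a + b) <= h a + h b.
  move=> a b.
  have [] := cvx 2%N (fun i : 'I_2 => if val i == 0%N then a else b) (fun _ => 1) (fun i => ltr01).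
  by rewrite !big_ord_recl !big_ord0 /= !scale1r !mul1r !addr0.
have hZ : forall (t : R) a, 0 <= t -> h (t *: a) <= t * h a.
  move=> t a; rewrite le0r => /orP [/eqP ->|tp]; first by rewrite scale0r mul0r.
  have [] := cvx 1%N (fun _ => a) (fun _ => t) (fun i => tp).
  by rewrite !big_ord1.
apply: le_trans (hD _ _) _; rewrite lerD2l.
apply: (big_ind2 (fun u w => h u <= w)) => //.
  by move=> a1 a2 b1 b2 e1 e2; apply: le_trans (hD _ _) _; apply: lerD.
by move=> i _; apply: hZ.
Qed.


Lemma vR_lin (p : 'rV[int]_d) (b : 'I_n -> int) : \sum_i b i *: v i = - p ->
  vR R p = - \sum_i (b i)%:~R *: vR R (v i).
Proof.
move=> Hp; have -> : p = - \sum_i b i *: v i by rewrite Hp opprK.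
apply/rowP => c; rewrite !mxE summxE.
rewrite summxE.
rewrite intrN rmorph_sum.
by congr (- _); apply: eq_bigr => i _; rewrite !mxE /= intrM.
Qed.
End Real.

Theorem lemma5p4 (R : realType) (d n : nat) (Delta : 'rV[R]_d -> Prop)
    (v : 'I_n -> 'rV[int]_d) (T : {set {set option 'I_n}}) :
  reflexive_polytope Delta ->
  (forall i, boundary_pt Delta (vR R (v i))) ->
  (forall x, vertex_pt Delta x -> exists i, x = vR R (v i)) ->
  triangulation v Delta T -> regular R v T -> max_simplices_contain_0 T ->
  forall (p : 'rV[int]_d) (q : int),
  (* p (+) q lies in K = cone(v_0, ..., v_n), v_0 = 0 (+) 1, v_i = v_i (+) 1 *)
  (exists (mu0 : R) (mu : 'I_n -> R), 0 <= mu0 /\ (forall i, 0 <= mu i) /\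
     vR R p = \sum_i mu i *: vR R (v i) /\ q%:~R = mu0 + \sum_i mu i) ->
  forall (b0 : int) (b : 'I_n -> int),
  (* sum_{i=0}^n b_i v_i = - (p (+) q) *)
  \sum_i b i *: v i = - p -> b0 + \sum_i b i = - q ->
  b0 <= 0 ->
  (* int_A Phi_beta, computed in A_k for any k >= max_i b_i *)
  forall k : nat, (forall i, b i <= k%:Z) ->
  forall f, is_toric_integral (@rayK d n v k) (coneK R v T (k:=k)) f ->
  int_Ak f (@PhiK n k b0 b) != 0 ->
  forall h : 'rV[R]_d -> R, ample v T h ->
  0 <= \sum_i (b i)%:~R * h (vR R (v i)) + h (vR R p).
Proof.
move=> _ _ _ _ _ _ p q _ b0 b Hp _ _ k _ f Hf Hne h Ha.
have Hcone : exists J, sigma_cone T J /\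
    forall i, i \in [set i | b i < 0] -> in_cone v J (vR R (v i)).
  apply: NNPP => nH; move/negP: Hne; apply.
  have [Q EQ] := idK_factor k b0 b.
  rewrite /int_Ak EQ (vanish Hf) ?mulr0 //.
  move=> [J [sJ HJ]]; apply: nH; exists J; split => // i iS; apply: HJ.
  by exists i; split => // j; rewrite inE.
case: Hcone => J [sJ HJ].
case: (Ha) => lin _ _; have [l Hl] := lin J sJ.
pose nb i : R := if b i < 0 then - (b i)%:~R else 0.
pose pb i : R := if b i < 0 then 0 else (b i)%:~R.
have nb0 : forall i, 0 <= nb i.
  by move=> i; rewrite /nb; case: ifP => // bi; rewrite oppr_ge0 lerz0 ltW.
have pb0 : forall i, 0 <= pb i.
  by move=> i; rewrite /pb; case: ifP => // /negbT; rewrite -leNgt ler0z.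
have Ew : vR R p + \sum_i pb i *: vR R (v i) = \sum_i nb i *: vR R (v i).
  rewrite (vR_lin R Hp) addrC; apply/eqP; rewrite subr_eq; apply/eqP.
  rewrite -big_split /=; apply: eq_bigr => i _; rewrite -scalerDl; congr (_ *: _).
  by rewrite /nb /pb; case: ifP => _; rewrite ?addNr ?add0r.
have Hw : h (\sum_i nb i *: vR R (v i)) = \sum_i nb i * h (vR R (v i)).
  rewrite Hl; last first.
    apply: in_cone_sum => // i; rewrite /nb; case: ifP => [bi _|]; last by rewrite eqxx.
    by apply: HJ; rewrite inE.
  rewrite dotR_sum; apply: eq_bigr => i _.
  rewrite /nb; case: ifP => [bi|]; last by rewrite !mul0r.
  by rewrite Hl //; apply: HJ; rewrite inE.
have Hs := sublin Ha (vR R p) (fun i => vR R (v i)) pb0.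
rewrite /= Ew Hw in Hs.
have Eb : \sum_i (b i)%:~R * h (vR R (v i)) =
    \sum_i pb i * h (vR R (v i)) - \sum_i nb i * h (vR R (v i)).
  rewrite -sumrB; apply: eq_bigr => i _; rewrite -mulrBl; congr (_ * _).
  by rewrite /nb /pb; case: ifP => _; rewrite ?subr0 ?opprK ?add0r.
rewrite Eb; lra.
Qed.
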